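(* The subspaces $\mathcal{C}_0^{sym}$ and $\mathcal{C}_0^{cw}$ of $\mathcal{C}$ are orthogonal with respect to the mixed area: $A(\gamma_1,\gamma_2)=0$ for all $\gamma_1\in\mathcal{C}_0^{sym}$ and $\gamma_2\in\mathcal{C}_0^{cw}$. Moreover both subspaces are orthogonal to $\mathcal{U}=\{\lambda u:\lambda\in\mathbb{R}\}$.
   Context: Standing setting. $[a,b]$ is the $2\times2$ determinant with columns $a,b$. The unit ball $U$ of a normed plane is compact convex, origin-symmetric, with nonempty interior, and boundary $u=\partial U$ a union of $2n$ arcs $u_{i+n}=-u_i$, each a smooth strictly convex arc or a segment; $u$ is parameterized as a closed curve $u:[0,2T]\to\mathbb{R}^2$ with $u(t+T)=-u(t)$, smooth with $u'\ne0$ on each interval $[t_i,t_{i+1}]$ between vertices ($[u',u'']\neq 0$ on strictly convex arcs); on each such interval $v(t)=u'(t)/[u(t),u'(t)]$. Admissible class $\mathcal{C}$: closed continuous curves $\gamma:[0,2T]\to\mathbb{R}^2$ (extended $2T$-periodically), smooth on each $[t_i,t_{i+1}]$ with $\gamma'(t)=r(t)u'(t)$ for a scalar function $r$. Dual length $L_*(\gamma)=\int_0^{2T} r(t)[u,u'](t)\,dt$; mixed area $A(\gamma_1,\gamma_2)=\frac12\int_0^{2T}[\gamma_1,\gamma_2'](t)\,dt$. $\mathcal{C}_0^{sym}$ is the set of $\gamma\in\mathcal{C}$ with $\gamma(t+T)=-\gamma(t)$ for all $t$ and $L_*(\gamma)=0$. $\mathcal{C}_0^{cw}$ is the set of $\gamma\in\mathcal{C}$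 with $L_*(\gamma)=0$ that are of constant width, i.e. $[\gamma(t+T),v(t+T)]+[\gamma(t),v(t)]=c$ for a constant $c$ (necessarily $c=0$ here). *)

(* Defs.v *)
From Stdlib Require Import Reals Lra.
From Coquelicot Require Import Coquelicot.
Open Scope R_scope.

Definition vec := (R * R)%type.

Definition vadd (a b : vec) : vec := (fst a + fst b, snd a + snd b).
Definition vopp (a : vec) : vec := (- fst a, - snd a).
Definition vscal (l : R) (a : vec) : vec := (l * fst a, l * snd a).
Definition vzero : vec := (0, 0).

Definition bracket (a b : vec) : R := fst a * snd b - snd a * fst b.

Definition vdist (a b : vec) : R :=
  sqrt ((fst a - fst b) ^ 2 + (snd a - snd b) ^ 2).

Definition dv (f : R -> vec) (t : R) : vec :=
  (Derive (fun s => fst (f s)) t, Derive (fun s => snd (f s)) t).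

Definition smoothR (f : R -> R) : Prop := forall (k : nat) (x : R), ex_derive_n f k x.
Definition smoothV (g : R -> vec) : Prop :=
  smoothR (fun s => fst (g s)) /\ smoothR (fun s => snd (g s)).

(** f is smooth on the closed interval [a,b]: it is the restriction of a
    smooth function on R. *)
Definition smooth_on (f : R -> vec) (a b : R) : Prop :=
  exists g : R -> vec, smoothV g /\ forall s, a <= s <= b -> f s = g s.

Definition pset := vec -> Prop.

Definition p_bounded (S : pset) : Prop :=
  exists M, forall p, S p -> Rabs (fst p) <= M /\ Rabs (snd p) <= M.
Definition p_in_closure (S : pset) (p : vec) : Prop :=
  forall eps, 0 < eps -> exists q, S q /\ vdist q p < eps.
Definition p_closed (S : pset) : Prop := forall p, p_in_closure S p -> S p.
Definition p_compact (S : pset) : Prop := p_bounded S /\ p_closed S.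
Definition p_interior (S : pset) (p : vec) : Prop :=
  exists eps, 0 < eps /\ forall q, vdist q p < eps -> S q.
Definition p_boundary (S : pset) (p : vec) : Prop :=
  p_in_closure S p /\ ~ p_interior S p.
Definition p_convex (S : pset) : Prop :=
  forall p q l, S p -> S q -> 0 <= l <= 1 ->
    S (vadd (vscal (1 - l) p) (vscal l q)).
Definition p_symmetric (S : pset) : Prop := forall p, S p -> S (vopp p).

(** ---- The standing setting ----
   U : unit ball; T > 0; the boundary is split into 2n arcs with parameter
   vertices tv 0 = 0 < tv 1 < ... < tv (2n) = 2T;  u : R -> R^2 is the
   parameterization (given on all of R, with u(t+T) = -u(t), hence
   2T-periodic). *)
Definition standing_setting (U : pset) (T : R) (n : nat) (tv : nat -> R)
    (u : R -> vec) : Prop :=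
  p_compact U /\ p_convex U /\ p_symmetric U /\ (exists p, p_interior U p) /\
  0 < T /\ (1 <= n)%nat /\
  tv 0%nat = 0 /\ tv (2 * n)%nat = 2 * T /\
  (forall i, (i < 2 * n)%nat -> tv i < tv (S i)) /\
  (forall i, (i <= n)%nat -> tv (i + n)%nat = tv i + T) /\
  (forall t, u (t + T) = vopp (u t)) /\
  (forall p, p_boundary U p <-> exists t, 0 <= t <= 2 * T /\ u t = p) /\
  (forall s t, 0 <= s < 2 * T -> 0 <= t < 2 * T -> u s = u t -> s = t) /\
  (forall i, (i < 2 * n)%nat ->
     exists g : R -> vec, smoothV g /\
       (forall s, tv i <= s <= tv (S i) -> u s = g s /\ dv g s <> vzero) /\
       ((forall s, tv i <= s <= tv (S i) -> bracket (dv g s) (dv (dv g) s) <> 0)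
        \/
        (exists p q, p <> q /\ forall s, tv i <= s <= tv (S i) ->
           exists l, 0 <= l <= 1 /\ u s = vadd (vscal (1 - l) p) (vscal l q)))).

Definition is_vertex (n : nat) (tv : nat -> R) (t : R) : Prop :=
  exists i, (i <= 2 * n)%nat /\ t = tv i.

(** v(t) = u'(t) / [u(t), u'(t)]  (meaningful off the vertices) *)
Definition vfield (u : R -> vec) (t : R) : vec :=
  vscal (/ bracket (u t) (dv u t)) (dv u t).

(** Admissible class C: closed continuous curves (extended 2T-periodically),
    smooth on each [t_i, t_(i+1)], with gamma' = r u' there (the derivative
    condition is imposed on the open arcs, where u' and gamma' are
    unambiguous). The scalar function r is carried as data. *)
Definition admissible (T : R) (n : nat) (tv : nat -> R) (u : R -> vec)
    (gamma : R -> vec) (r : R -> R) : Prop :=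
  (forall t, continuous (fun s => fst (gamma s)) t /\
             continuous (fun s => snd (gamma s)) t) /\
  (forall t, gamma (t + 2 * T) = gamma t) /\
  (forall i, (i < 2 * n)%nat -> smooth_on gamma (tv i) (tv (S i))) /\
  (forall i t, (i < 2 * n)%nat -> tv i < t < tv (S i) ->
     dv gamma t = vscal (r t) (dv u t)).

Definition Lstar (T : R) (u : R -> vec) (r : R -> R) : R :=
  RInt (fun t => r t * bracket (u t) (dv u t)) 0 (2 * T).

Definition mixed_area (T : R) (g1 g2 : R -> vec) : R :=
  / 2 * RInt (fun t => bracket (g1 t) (dv g2 t)) 0 (2 * T).

Definition in_C0_sym (T : R) (n : nat) (tv : nat -> R) (u : R -> vec)
    (gamma : R -> vec) (r : R -> R) : Prop :=
  admissible T n tv u gamma r /\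
  (forall t, gamma (t + T) = vopp (gamma t)) /\
  Lstar T u r = 0.

Definition in_C0_cw (T : R) (n : nat) (tv : nat -> R) (u : R -> vec)
    (gamma : R -> vec) (r : R -> R) : Prop :=
  admissible T n tv u gamma r /\
  Lstar T u r = 0 /\
  exists c : R, forall t, 0 <= t <= 2 * T -> ~ is_vertex n tv t ->
    bracket (gamma (t + T)) (vfield u (t + T)) + bracket (gamma t) (vfield u t) = c.

(* Main.v *)
Require Import Defs.
From Stdlib Require Import Reals Lra Lia.
From Coquelicot Require Import Coquelicot.
Open Scope R_scope.

Lemma tv_mono (n : nat) (tv : nat -> R) :
  (forall i, (i < 2 * n)%nat -> tv i < tv (S i)) ->
  forall a b, (a <= b <= 2 * n)%nat -> tv a <= tv b.
Proof.
  intros H a b Hab. induction b.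
  - assert (a = 0)%nat by lia. subst; lra.
  - destruct (Nat.eq_dec a (S b)). subst; lra.
    assert (tv a <= tv b) by (apply IHb; lia).
    assert (tv b < tv (S b)) by (apply H; lia). lra.
Qed.

Lemma loc_open (f g : R -> R) a b t :
  a < t < b -> (forall s, a <= s <= b -> f s = g s) ->
  locally t (fun s => f s = g s).
Proof.
  intros Ht H.
  assert (Hp : 0 < Rmin (t - a) (b - t)) by (apply Rmin_pos; lra).
  exists (mkposreal _ Hp). intros y Hy. apply H.
  unfold ball in Hy; simpl in Hy; unfold AbsRing_ball, abs, minus, plus, opp in Hy; simpl in Hy.
  assert (H1 := Rmin_l (t - a) (b - t)). assert (H2 := Rmin_r (t - a) (b - t)).
  apply Rabs_def2 in Hy. lra.
Qed.

Lemma sm_exd f x : smoothR f -> ex_derive f x.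
Proof. intros H. exact (H 1%nat x). Qed.

Lemma sm_exd2 f x : smoothR f -> ex_derive (Derive f) x.
Proof. intros H. exact (H 2%nat x). Qed.

Lemma sm_cont f x : smoothR f -> continuous f x.
Proof. intros H. apply (ex_derive_continuous (K:=R_AbsRing) (V:=R_NormedModule)), sm_exd, H. Qed.

Lemma sm_dcont f x : smoothR f -> continuous (Derive f) x.
Proof. intros H. apply (ex_derive_continuous (K:=R_AbsRing) (V:=R_NormedModule)), sm_exd2, H. Qed.

Lemma dv_loc (g G : R -> vec) a b t :
  a < t < b -> (forall s, a <= s <= b -> g s = G s) -> dv g t = dv G t.
Proof.
  intros Ht H. unfold dv. f_equal; apply Derive_ext_loc;
  apply (loc_open _ _ a b); auto; intros s Hs; rewrite H; auto.
Qed.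

Lemma cont_mul (f g : R -> R) (x : R) : continuous f x -> continuous g x -> continuous (fun y => f y * g y) x.
Proof. intros; apply (continuous_mult (U:=R_UniformSpace) (K:=R_AbsRing) f g); auto. Qed.
Lemma cont_sub (f g : R -> R) (x : R) : continuous f x -> continuous g x -> continuous (fun y => f y - g y) x.
Proof. intros; apply (continuous_minus (U:=R_UniformSpace) (K:=R_AbsRing) (V:=R_NormedModule) f g); auto. Qed.
Lemma cont_add (f g : R -> R) (x : R) : continuous f x -> continuous g x -> continuous (fun y => f y + g y) x.
Proof. intros; apply (continuous_plus (U:=R_UniformSpace) (K:=R_AbsRing) (V:=R_NormedModule) f g); auto. Qed.
Lemma cont_scal (c : R) (f : R -> R) (x : R) : continuous f x -> continuous (fun y => c * f y) x.
Proof. intros; apply (continuous_mult (U:=R_UniformSpace) (K:=R_AbsRing) (fun _ => c) f); auto. apply continuous_const. Qed.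

Definition pwc (tv : nat -> R) (j k : nat) (f : R -> R) : Prop :=
  forall i, (j <= i < k)%nat -> exists F : R -> R,
    (forall t, tv i <= t <= tv (S i) -> continuous F t) /\
    (forall t, tv i < t < tv (S i) -> f t = F t).

Lemma pwc_piece tv j k g i :
  (j <= i < k)%nat -> tv i < tv (S i) -> pwc tv j k g -> ex_RInt g (tv i) (tv (S i)).
Proof.
  intros Hi Hlt Hg. destruct (Hg _ Hi) as [F [HF1 HF2]].
  apply (ex_RInt_ext F). intros x Hx. rewrite Rmin_left, Rmax_right in Hx by lra.
  symmetry; apply HF2; lra.
  apply (ex_RInt_continuous (V:=R_CompleteNormedModule)). intros z Hz. rewrite Rmin_left, Rmax_right in Hz by lra.
  apply HF1; lra.
Qed.

Lemma pwc_ex tv j k g :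
  (forall i, (j <= i < k)%nat -> tv i < tv (S i)) ->
  pwc tv j k g ->
  forall d, (j + d <= k)%nat -> ex_RInt g (tv j) (tv (j + d)%nat).
Proof.
  intros Hm Hg d. induction d; intros Hd.
  - rewrite Nat.add_0_r. apply ex_RInt_point.
  - replace (j + S d)%nat with (S (j + d)) by lia.
    apply (ex_RInt_Chasles _ _ (tv (j + d)%nat)). apply IHd; lia.
    apply (pwc_piece tv j k); auto; try lia. apply Hm; lia.
Qed.

Lemma pwc_agree tv j k f g :
  (forall i, (j <= i < k)%nat -> tv i < tv (S i)) ->
  pwc tv j k g ->
  (forall i t, (j <= i < k)%nat -> tv i < t < tv (S i) -> f t = g t) ->
  forall d, (j + d <= k)%nat -> is_RInt f (tv j) (tv (j + d)%nat) (RInt g (tv j) (tv (j + d)%nat)).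
Proof.
  intros Hm Hg Hfg d. induction d; intros Hd.
  - rewrite Nat.add_0_r, RInt_point. exact (is_RInt_point f (tv j)).
  - assert (Hi : (j <= j + d < k)%nat) by lia.
    assert (Hlt := Hm _ Hi).
    assert (exg := pwc_piece tv j k g _ Hi Hlt Hg).
    replace (j + S d)%nat with (S (j + d)) by lia.
    rewrite <- (RInt_Chasles g (tv j) (tv (j + d)%nat)).
    + assert (H1 := IHd ltac:(lia)).
      assert (H2 : is_RInt f (tv (j + d)%nat) (tv (S (j + d))) (RInt g (tv (j + d)%nat) (tv (S (j + d))))).
      { apply (is_RInt_ext g). intros x Hx. rewrite Rmin_left, Rmax_right in Hx by lra.
        symmetry; apply Hfg with (i := (j + d)%nat); auto.
        exact (RInt_correct _ _ _ exg). }
      exact (is_RInt_Chasles f _ _ _ _ _ H1 H2).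
    + apply (pwc_ex tv j k); auto; lia.
    + exact exg.
Qed.

Lemma pair_eq (a b : vec) : fst a = fst b -> snd a = snd b -> a = b.
Proof. destruct a, b; simpl; intros; subst; auto. Qed.

Lemma sq_abs x : x ^ 2 = Rabs x * Rabs x.
Proof. rewrite <- Rabs_mult, Rabs_pos_eq. ring. apply Rle_0_sqr. Qed.

Lemma vdist_c1 a b : Rabs (fst a - fst b) <= vdist a b.
Proof.
  unfold vdist. rewrite <- sqrt_Rsqr_abs. apply sqrt_le_1_alt. unfold Rsqr.
  assert (0 <= (snd a - snd b) ^ 2) by apply pow2_ge_0.
  replace ((fst a - fst b) ^ 2) with ((fst a - fst b) * (fst a - fst b)) by ring. lra.
Qed.

Lemma vdist_c2 a b : Rabs (snd a - snd b) <= vdist a b.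
Proof.
  unfold vdist. rewrite <- sqrt_Rsqr_abs. apply sqrt_le_1_alt. unfold Rsqr.
  assert (0 <= (fst a - fst b) ^ 2) by apply pow2_ge_0.
  replace ((snd a - snd b) ^ 2) with ((snd a - snd b) * (snd a - snd b)) by ring. lra.
Qed.

Lemma vdist_le a b : vdist a b <= Rabs (fst a - fst b) + Rabs (snd a - snd b).
Proof.
  unfold vdist. assert (H1 := Rabs_pos (fst a - fst b)). assert (H2 := Rabs_pos (snd a - snd b)).
  rewrite <- (sqrt_Rsqr (Rabs _ + Rabs _)) by lra. apply sqrt_le_1_alt. unfold Rsqr.
  rewrite !sq_abs. nra.
Qed.

Lemma zero_int (U : pset) : p_convex U -> p_symmetric U -> (exists p, p_interior U p) ->
  exists e, 0 < e /\ forall q, vdist q vzero < e -> U q.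
Proof.
  intros Hc Hs [p [e [He Hp]]]. exists e; split; auto. intros q Hq.
  assert (A : U (vadd p q)).
  { apply Hp. replace (vdist (vadd p q) p) with (vdist q vzero); auto.
    unfold vdist, vadd, vzero; simpl. f_equal; ring. }
  assert (B : U (vadd p (vopp q))).
  { apply Hp. replace (vdist (vadd p (vopp q)) p) with (vdist q vzero); auto.
    unfold vdist, vadd, vopp, vzero; simpl. f_equal; ring. }
  apply Hs in B.
  assert (C := Hc _ _ (1/2) A B ltac:(lra)).
  replace q with (vadd (vscal (1 - 1 / 2) (vadd p q)) (vscal (1 / 2) (vopp (vadd p (vopp q))))); auto.
  apply pair_eq; unfold vadd, vscal, vopp; simpl; field.
Qed.

Lemma deriv_err f t d K h : Rabs h > 0 -> Rabs ((f (t + h) - f t) / h - d) < K ->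
  Rabs (f (t + h) - f t - h * d) <= K * Rabs h.
Proof.
  intros Hh H.
  assert (h <> 0) by (intro; subst; rewrite Rabs_R0 in Hh; lra).
  replace (f (t + h) - f t - h * d) with (h * ((f (t + h) - f t) / h - d)) by (field; auto).
  rewrite Rabs_mult. nra.
Qed.

Lemma core (U : pset) (x : vec) (f1 f2 : R -> R) t d1 d2 e0 D0 :
  p_convex U -> 0 < e0 -> (forall q, vdist q vzero < e0 -> U q) -> 0 < D0 ->
  (forall h, Rabs h < D0 -> U (f1 (t + h), f2 (t + h))) ->
  f1 t = fst x -> f2 t = snd x ->
  derivable_pt_lim f1 t d1 -> derivable_pt_lim f2 t d2 ->
  fst x * d2 - snd x * d1 = 0 -> (d1 <> 0 \/ d2 <> 0) -> ~ p_interior U x -> False.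
Proof.
  intros Hc He0 Hball HD0 HU E1 E2 Hd1 Hd2 Hw Hd Hni.
  assert (Hx : fst x <> 0 \/ snd x <> 0).
  { destruct (Req_dec (fst x) 0); destruct (Req_dec (snd x) 0); auto.
    exfalso. apply Hni. exists e0; split; auto. intros q Hq. apply Hball.
    replace vzero with x; auto. apply pair_eq; simpl; auto. }
  assert (Hmu : exists mu, d1 = mu * fst x /\ d2 = mu * snd x).
  { destruct (Req_dec (fst x) 0) as [Z|Z].
    - destruct Hx as [Hx|Hx]; [contradiction|].
      exists (d2 / snd x). split. rewrite Z in Hw. rewrite Z.
      assert (snd x * d1 = 0) by lra. assert (d1 = 0).
      { destruct (Rmult_integral _ _ H); auto; contradiction. } rewrite H0; ring.
      field; auto.
    - exists (d1 / fst x). split. field; auto.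
      apply (Rmult_eq_reg_l (fst x)); auto. field_simplify; auto. nra. }
  destruct Hmu as [mu [Em1 Em2]].
  assert (Hmu0 : mu <> 0) by (intro Z; subst; destruct Hd; lra).
  assert (Hamu : 0 < Rabs mu) by (apply Rabs_pos_lt; auto).
  set (K := e0 * Rabs mu / 8).
  assert (HK : 0 < K) by (unfold K; nra).
  destruct (Hd1 K HK) as [D1 HD1]. destruct (Hd2 K HK) as [D2 HD2].
  set (hm := Rmin D0 (Rmin D1 D2) / 2).
  assert (Hm0 : 0 < hm).
  { unfold hm. assert (0 < Rmin D0 (Rmin D1 D2)) by (apply Rmin_pos; [lra| apply Rmin_pos; apply cond_pos]). lra. }
  assert (Hmb : hm < D0 /\ hm < D1 /\ hm < D2).
  { unfold hm. assert (H1 := Rmin_l D0 (Rmin D1 D2)). assert (H2 := Rmin_r D0 (Rmin D1 D2)).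
    assert (H3 := Rmin_l D1 D2). assert (H4 := Rmin_r D1 D2).
    assert (0 < Rmin D0 (Rmin D1 D2)) by (apply Rmin_pos; [lra| apply Rmin_pos; apply cond_pos]). lra. }
  assert (Hh : exists h, Rabs h = hm /\ mu * h = Rabs mu * hm).
  { destruct (Rlt_dec 0 mu).
    - exists hm. rewrite Rabs_pos_eq by lra. rewrite Rabs_pos_eq by lra. auto.
    - exists (- hm). rewrite Rabs_Ropp, Rabs_pos_eq by lra. rewrite Rabs_left by lra. split; auto; ring. }
  destruct Hh as [h [Hah Hmh]].
  set (s := Rabs mu * hm).
  assert (Hs : 0 < s) by (unfold s; nra).
  assert (HKs : K * hm = e0 * s / 8) by (unfold K, s; field).
  set (y1 := f1 (t + h)). set (y2 := f2 (t + h)).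
  assert (HUy : U (y1, y2)) by (apply HU; lra).
  assert (Er1 : Rabs (y1 - (1 + s) * fst x) <= K * hm).
  { rewrite <- Hah. replace (y1 - (1 + s) * fst x) with (f1 (t + h) - f1 t - h * d1).
    apply deriv_err. lra. apply HD1. intro Z; rewrite Z, Rabs_R0 in Hah; lra. lra.
    unfold y1. rewrite E1, Em1. unfold s. rewrite <- Hmh. ring. }
  assert (Er2 : Rabs (y2 - (1 + s) * snd x) <= K * hm).
  { rewrite <- Hah. replace (y2 - (1 + s) * snd x) with (f2 (t + h) - f2 t - h * d2).
    apply deriv_err. lra. apply HD2. intro Z; rewrite Z, Rabs_R0 in Hah; lra. lra.
    unfold y2. rewrite E2, Em2. unfold s. rewrite <- Hmh. ring. }
  apply Hni.
  assert (Hr : 0 < e0 * s / (4 * (1 + s))).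
  { apply Rdiv_lt_0_compat; nra. }
  exists (e0 * s / (4 * (1 + s))). split; auto.
  intros q Hq.
  assert (Hq1 := vdist_c1 q x). assert (Hq2 := vdist_c2 q x).
  assert (Hr1 : (1 + s) * (e0 * s / (4 * (1 + s))) = e0 * s / 4) by (field; lra).
  set (z := (((1 + s) * fst q - y1) / s, ((1 + s) * snd q - y2) / s)).
  assert (Hz : U z).
  { apply Hball. eapply Rle_lt_trans. apply vdist_le. unfold z, vzero; simpl.
    rewrite !Rminus_0_r.
    assert (B1 : Rabs (((1 + s) * fst q - y1) / s) < e0 / 2).
    { unfold Rdiv. rewrite Rabs_mult, Rabs_inv, (Rabs_pos_eq s) by lra.
      apply (Rmult_lt_reg_r s); [lra|]. rewrite Rmult_assoc, Rinv_l, Rmult_1_r by lra.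
      replace ((1 + s) * fst q - y1) with ((1 + s) * (fst q - fst x) - (y1 - (1 + s) * fst x)) by ring.
      eapply Rle_lt_trans. apply Rabs_triang. rewrite Rabs_Ropp, Rabs_mult, (Rabs_pos_eq (1 + s)) by lra.
      assert ((1 + s) * Rabs (fst q - fst x) < e0 * s / 4) by (rewrite <- Hr1; apply Rmult_lt_compat_l; lra).
      nra. }
    assert (B2 : Rabs (((1 + s) * snd q - y2) / s) < e0 / 2).
    { unfold Rdiv. rewrite Rabs_mult, Rabs_inv, (Rabs_pos_eq s) by lra.
      apply (Rmult_lt_reg_r s); [lra|]. rewrite Rmult_assoc, Rinv_l, Rmult_1_r by lra.
      replace ((1 + s) * snd q - y2) with ((1 + s) * (snd q - snd x) - (y2 - (1 + s) * snd x)) by ring.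
      eapply Rle_lt_trans. apply Rabs_triang. rewrite Rabs_Ropp, Rabs_mult, (Rabs_pos_eq (1 + s)) by lra.
      assert ((1 + s) * Rabs (snd q - snd x) < e0 * s / 4) by (rewrite <- Hr1; apply Rmult_lt_compat_l; lra).
      nra. }
    lra. }
  assert (Hl : 0 <= s / (1 + s) <= 1).
  { split. apply Rdiv_le_0_compat; lra. apply (Rmult_le_reg_r (1 + s)); [lra|].
    field_simplify; lra. }
  assert (C := Hc _ _ _ HUy Hz Hl).
  replace q with (vadd (vscal (1 - s / (1 + s)) (y1, y2)) (vscal (s / (1 + s)) z)); auto.
  apply pair_eq; unfold vadd, vscal, z; simpl; field; lra.
Qed.

Lemma dv_comp_deriv (g G : R -> vec) a b t :
  a < t < b -> (forall s, a <= s <= b -> g s = G s) -> smoothV G ->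
  is_derive (fun s => fst (g s)) t (fst (dv g t)) /\
  is_derive (fun s => snd (g s)) t (snd (dv g t)).
Proof.
  intros Ht H [S1 S2]. rewrite (dv_loc g G a b t Ht H). unfold dv; simpl. split.
  - apply (is_derive_ext_loc (fun s => fst (G s))).
    apply (loc_open _ _ a b); auto. intros s Hs; rewrite H; auto.
    apply Derive_correct, sm_exd, S1.
  - apply (is_derive_ext_loc (fun s => snd (G s))).
    apply (loc_open _ _ a b); auto. intros s Hs; rewrite H; auto.
    apply Derive_correct, sm_exd, S2.
Qed.

Lemma w_nz U T n tv u : standing_setting U T n tv u ->
  forall i t, (i < 2 * n)%nat -> tv i < t < tv (S i) -> bracket (u t) (dv u t) <> 0.
Proof.
  intros H i t Hi Ht.
  destruct H as [Hcomp [Hconv [Hsym [Hint [HT [Hn [H0 [H2n [Hlt [Hsh [Husym [Hbd [Hinj Harcs]]]]]]]]]]]]].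
  destruct (zero_int U Hconv Hsym Hint) as [e0 [He0 Hball]].
  assert (B0 : tv 0%nat <= tv i) by (apply (tv_mono n); auto; lia).
  assert (B1 : tv (S i) <= tv (2 * n)%nat) by (apply (tv_mono n); auto; lia).
  destruct (Harcs i Hi) as [g [Sg [Hg _]]].
  assert (Heq : forall s, tv i <= s <= tv (S i) -> u s = g s) by (intros; apply Hg; auto).
  assert (Hdv : dv u t <> vzero).
  { rewrite (dv_loc u g (tv i) (tv (S i)) t Ht Heq). apply Hg; lra. }
  destruct (dv_comp_deriv u g _ _ t Ht Heq Sg) as [D1 D2].
  apply is_derive_Reals in D1. apply is_derive_Reals in D2.
  assert (Hbt : p_boundary U (u t)) by (apply Hbd; exists t; split; [lra|auto]).
  intro Hw.
  assert (HD0 : 0 < Rmin (t - tv i) (tv (S i) - t)) by (apply Rmin_pos; lra).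
  apply (core U (u t) (fun s => fst (u s)) (fun s => snd (u s)) t (fst (dv u t)) (snd (dv u t)) e0 _
           Hconv He0 Hball HD0); auto.
  - intros h Hh. rewrite <- surjective_pairing.
    apply (proj2 Hcomp). apply (proj1 (A:=p_in_closure U (u (t + h))) (B := ~ p_interior U (u (t + h)))).
    apply (Hbd (u (t + h))). exists (t + h). split; auto.
    assert (H1 := Rmin_l (t - tv i) (tv (S i) - t)). assert (H2 := Rmin_r (t - tv i) (tv (S i) - t)).
    apply Rabs_def2 in Hh. lra.
  - destruct (Req_dec (fst (dv u t)) 0); destruct (Req_dec (snd (dv u t)) 0); auto.
    exfalso; apply Hdv. apply pair_eq; auto.
  - apply Hbt.
Qed.

Lemma isR_plus (f g : R -> R) a b If Ig : is_RInt f a b If -> is_RInt g a b Ig ->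
  is_RInt (fun t => f t + g t) a b (If + Ig).
Proof. intros H1 H2. exact (is_RInt_plus f g a b If Ig H1 H2). Qed.
Lemma isR_scal (f : R -> R) a b c If : is_RInt f a b If -> is_RInt (fun t => c * f t) a b (c * If).
Proof. intros H1. exact (is_RInt_scal f a b c If H1). Qed.
Lemma isR_chasles (f : R -> R) a b c l1 l2 : is_RInt f a b l1 -> is_RInt f b c l2 -> is_RInt f a c (l1 + l2).
Proof. intros H1 H2. exact (is_RInt_Chasles f a b c l1 l2 H1 H2). Qed.
Lemma isR_RInt (f : R -> R) a b l : is_RInt f a b l -> RInt f a b = l.
Proof. intros H. exact (@is_RInt_unique R_CompleteNormedModule f a b l H). Qed.
Lemma isR_uniq (f : R -> R) a b l1 l2 : is_RInt f a b l1 -> is_RInt f a b l2 -> l1 = l2.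
Proof. intros H1 H2. rewrite <- (isR_RInt f a b l1 H1). apply isR_RInt; auto. Qed.
Lemma isR_ext (f g : R -> R) a b l : (forall t, f t = g t) -> is_RInt f a b l -> is_RInt g a b l.
Proof. intros H H1. apply (is_RInt_ext f); auto. Qed.
Lemma isR_shift (f : R -> R) a b c l : is_RInt f (a + c) (b + c) l -> is_RInt (fun t => f (t + c)) a b l.
Proof.
  intros H. assert (H' : is_RInt f (1 * a + c) (1 * b + c) l) by (rewrite !Rmult_1_l; auto).
  assert (H2 := is_RInt_comp_lin f 1 c a b l H').
  apply (is_RInt_ext _ (fun t => f (t + c)) a b l) in H2. exact H2.
  intros x _. unfold scal; simpl; unfold mult; simpl. rewrite !Rmult_1_l. reflexivity.
Qed.

Lemma pwc_mul tv j k f g : pwc tv j k f -> pwc tv j k g -> pwc tv j k (fun t => f t * g t).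
Proof.
  intros Hf Hg i Hi. destruct (Hf i Hi) as [F [F1 F2]]. destruct (Hg i Hi) as [G [G1 G2]].
  exists (fun t => F t * G t). split. intros; apply cont_mul; auto.
  intros t Ht; rewrite F2, G2; auto.
Qed.
Lemma pwc_sub tv j k f g : pwc tv j k f -> pwc tv j k g -> pwc tv j k (fun t => f t - g t).
Proof.
  intros Hf Hg i Hi. destruct (Hf i Hi) as [F [F1 F2]]. destruct (Hg i Hi) as [G [G1 G2]].
  exists (fun t => F t - G t). split. intros; apply cont_sub; auto.
  intros t Ht; rewrite F2, G2; auto.
Qed.
Lemma pwc_scal tv j k c f : pwc tv j k f -> pwc tv j k (fun t => c * f t).
Proof.
  intros Hf i Hi. destruct (Hf i Hi) as [F [F1 F2]].
  exists (fun t => c * F t). split. intros; apply cont_scal; auto.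
  intros t Ht; rewrite F2; auto.
Qed.
Lemma pwc_br tv j k p q : pwc tv j k (fun t => fst (p t)) -> pwc tv j k (fun t => snd (p t)) ->
  pwc tv j k (fun t => fst (q t)) -> pwc tv j k (fun t => snd (q t)) ->
  pwc tv j k (fun t => bracket (p t) (q t)).
Proof.
  intros. unfold bracket. apply pwc_sub; apply pwc_mul; auto.
Qed.

Definition pcurve (tv : nat -> R) (j k : nat) (a : R -> vec) :=
  forall i, (j <= i < k)%nat -> smooth_on a (tv i) (tv (S i)).

Lemma pwc_curve tv j k a : pcurve tv j k a ->
  pwc tv j k (fun t => fst (a t)) /\ pwc tv j k (fun t => snd (a t)) /\
  pwc tv j k (fun t => fst (dv a t)) /\ pwc tv j k (fun t => snd (dv a t)).
Proof.
  intros H. repeat split; intros i Hi; destruct (H i Hi) as [A [[S1 S2] HA]].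
  - exists (fun t => fst (A t)). split. intros; apply sm_cont; auto.
    intros t Ht; rewrite HA; auto; lra.
  - exists (fun t => snd (A t)). split. intros; apply sm_cont; auto.
    intros t Ht; rewrite HA; auto; lra.
  - exists (fun t => Derive (fun s => fst (A s)) t). split. intros; apply sm_dcont; auto.
    intros t Ht. rewrite (dv_loc a A (tv i) (tv (S i)) t Ht HA). reflexivity.
  - exists (fun t => Derive (fun s => snd (A s)) t). split. intros; apply sm_dcont; auto.
    intros t Ht. rewrite (dv_loc a A (tv i) (tv (S i)) t Ht HA). reflexivity.
Qed.

Lemma pwc_bdv tv j k a b : pcurve tv j k a -> pcurve tv j k b ->
  pwc tv j k (fun t => bracket (a t) (dv b t)).
Proof.
  intros Ha Hb. destruct (pwc_curve _ _ _ _ Ha) as [? [? [? ?]]].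
  destruct (pwc_curve _ _ _ _ Hb) as [? [? [? ?]]]. apply pwc_br; auto.
Qed.

Lemma pwc_dvb tv j k a b : pcurve tv j k a -> pcurve tv j k b ->
  pwc tv j k (fun t => bracket (dv a t) (b t)).
Proof.
  intros Ha Hb. destruct (pwc_curve _ _ _ _ Ha) as [? [? [? ?]]].
  destruct (pwc_curve _ _ _ _ Hb) as [? [? [? ?]]]. apply pwc_br; auto.
Qed.

Lemma deriv_br (f g h k : R -> R) (x : R) : ex_derive f x -> ex_derive g x -> ex_derive h x -> ex_derive k x ->
  is_derive (fun t => f t * g t - h t * k t) x
    (Derive f x * g x + f x * Derive g x - (Derive h x * k x + h x * Derive k x)).
Proof. intros. auto_derive. tauto. rewrite !Rmult_1_l. reflexivity. Qed.

Lemma is_derive_val (f : R -> R) x l l' : is_derive f x l -> l = l' -> is_derive f x l'.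
Proof. intros H E; subst; auto. Qed.

Lemma ibp_piece (a b A B : R -> vec) lo hi : lo < hi -> smoothV A -> smoothV B ->
  (forall s, lo <= s <= hi -> a s = A s) -> (forall s, lo <= s <= hi -> b s = B s) ->
  is_RInt (fun t => bracket (dv a t) (b t) + bracket (a t) (dv b t)) lo hi
    (bracket (a hi) (b hi) - bracket (a lo) (b lo)).
Proof.
  intros Hlh [SA1 SA2] [SB1 SB2] HA HB.
  apply (is_RInt_ext (fun t => bracket (dv A t) (B t) + bracket (A t) (dv B t))).
  { intros x Hx. rewrite Rmin_left, Rmax_right in Hx by lra.
    rewrite (dv_loc a A lo hi x Hx HA), (dv_loc b B lo hi x Hx HB), HA, HB; auto; lra. }
  rewrite HA, HB, (HA lo), (HB lo); try lra.
  assert (H := is_RInt_derive (fun t => bracket (A t) (B t))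
     (fun t => bracket (dv A t) (B t) + bracket (A t) (dv B t)) lo hi).
  apply H.
  - intros x _.
    assert (D := deriv_br (fun t => fst (A t)) (fun t => snd (B t)) (fun t => snd (A t)) (fun t => fst (B t)) x
      ltac:(apply sm_exd; auto) ltac:(apply sm_exd; auto) ltac:(apply sm_exd; auto) ltac:(apply sm_exd; auto)).
    apply (is_derive_val _ _ _ _ D). unfold bracket, dv; simpl. ring.
  - intros x _. unfold bracket, dv; simpl.
    apply cont_add; apply cont_sub; apply cont_mul; first [apply sm_dcont; auto | apply sm_cont; auto].
Qed.

Lemma tele (n : nat) tv a b : (forall i, (i < 2 * n)%nat -> tv i < tv (S i)) ->
  pcurve tv 0 (2 * n) a -> pcurve tv 0 (2 * n) b ->
  forall k, (k <= 2 * n)%nat ->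
  is_RInt (fun t => bracket (dv a t) (b t) + bracket (a t) (dv b t)) (tv 0%nat) (tv k)
    (bracket (a (tv k)) (b (tv k)) - bracket (a (tv 0%nat)) (b (tv 0%nat))).
Proof.
  intros Hm Ha Hb k. induction k; intros Hk.
  - replace (bracket (a (tv 0%nat)) (b (tv 0%nat)) - bracket (a (tv 0%nat)) (b (tv 0%nat))) with 0 by ring.
    exact (is_RInt_point _ (tv 0%nat)).
  - assert (Hi : (0 <= k < 2 * n)%nat) by lia.
    destruct (Ha k Hi) as [A [SA HA]]. destruct (Hb k Hi) as [B [SB HB]].
    assert (P := ibp_piece a b A B (tv k) (tv (S k)) (Hm k ltac:(lia)) SA SB HA HB).
    assert (Q := isR_chasles _ _ _ _ _ _ (IHk ltac:(lia)) P).
    replace (bracket (a (tv (S k))) (b (tv (S k))) - bracket (a (tv 0%nat)) (b (tv 0%nat))) with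
      (bracket (a (tv k)) (b (tv k)) - bracket (a (tv 0%nat)) (b (tv 0%nat)) +
        (bracket (a (tv (S k))) (b (tv (S k))) - bracket (a (tv k)) (b (tv k)))) by ring.
    exact Q.
Qed.

Lemma ibp T (n : nat) tv a b : tv 0%nat = 0 -> tv (2 * n)%nat = 2 * T ->
  (forall i, (i < 2 * n)%nat -> tv i < tv (S i)) ->
  pcurve tv 0 (2 * n) a -> pcurve tv 0 (2 * n) b ->
  bracket (a (2 * T)) (b (2 * T)) = bracket (a 0) (b 0) ->
  RInt (fun t => bracket (a t) (dv b t)) 0 (2 * T) = RInt (fun t => bracket (b t) (dv a t)) 0 (2 * T).
Proof.
  intros H0 H2n Hm Ha Hb Hper.
  assert (Hm' : forall i, (0 <= i < 2 * n)%nat -> tv i < tv (S i)) by (intros; apply Hm; lia).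
  assert (X := pwc_agree tv 0 (2 * n) (fun t => bracket (a t) (dv b t)) _ Hm' (pwc_bdv _ _ _ _ _ Ha Hb)
     (fun _ _ _ _ => eq_refl) (2 * n) ltac:(lia)).
  assert (Y := pwc_agree tv 0 (2 * n) (fun t => bracket (dv a t) (b t)) _ Hm' (pwc_dvb _ _ _ _ _ Ha Hb)
     (fun _ _ _ _ => eq_refl) (2 * n) ltac:(lia)).
  rewrite Nat.add_0_l, H0, H2n in X, Y.
  assert (Z := tele n tv a b Hm Ha Hb (2 * n) ltac:(lia)).
  rewrite H0, H2n, Hper in Z.
  assert (W := isR_uniq _ _ _ _ _ (isR_plus _ _ _ _ _ _ Y X) Z).
  assert (V : is_RInt (fun t => bracket (b t) (dv a t)) 0 (2 * T) (-1 * RInt (fun t => bracket (dv a t) (b t)) 0 (2 * T))).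
  { apply (isR_ext (fun t => -1 * bracket (dv a t) (b t))). intros t; unfold bracket; ring. apply isR_scal; exact Y. }
  rewrite (isR_RInt _ _ _ _ V). lra.
Qed.

Lemma shift_deriv (f : R -> R) (t T D : R) : (forall s, f s = - f (s + T)) -> is_derive f (t + T) D -> Derive f t = - D.
Proof.
  intros Hf HD. assert (E : ex_derive f (t + T)) by (exists D; auto).
  apply is_derive_unique. apply (is_derive_ext (fun s => - f (s + T))). intros; symmetry; auto.
  apply (is_derive_val _ _ (- Derive f (t + T))).
  - auto_derive. auto. rewrite Rmult_1_l. reflexivity.
  - rewrite (is_derive_unique _ _ _ HD). reflexivity.
Qed.

Lemma dv_anti (g : R -> vec) T t : (forall s, g (s + T) = vopp (g s)) ->
  is_derive (fun s => fst (g s)) (t + T) (fst (dv g (t + T))) ->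
  is_derive (fun s => snd (g s)) (t + T) (snd (dv g (t + T))) ->
  dv g (t + T) = vopp (dv g t).
Proof.
  intros Hg D1 D2. unfold dv at 2. unfold vopp; simpl.
  rewrite (shift_deriv (fun s => fst (g s)) t T _ ltac:(intros s; cbv beta; rewrite Hg; simpl; ring) D1).
  rewrite (shift_deriv (fun s => snd (g s)) t T _ ltac:(intros s; cbv beta; rewrite Hg; simpl; ring) D2).
  apply pair_eq; simpl; ring.
Qed.

Lemma key_alg (x d g1 g2 : vec) (r c : R) : bracket x d <> 0 ->
  bracket g2 (vscal (/ bracket (vopp x) (vopp d)) (vopp d)) + bracket g1 (vscal (/ bracket x d) d) = c ->
  bracket g1 (vscal r d) + bracket g2 (vopp (vscal r d)) = c * bracket x (vscal r d).
Proof.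
  destruct x as [x1 x2], d as [d1 d2], g1 as [a1 a2], g2 as [b1 b2].
  unfold bracket, vscal, vopp; simpl. intros Hw Hc.
  set (w := x1 * d2 - x2 * d1) in *.
  replace (- x1 * - d2 - - x2 * - d1) with w in Hc by (unfold w; ring).
  assert (E : (a1 * d2 - a2 * d1) - (b1 * d2 - b2 * d1) = c * w).
  { rewrite <- Hc. field_simplify; auto. }
  transitivity (r * ((a1 * d2 - a2 * d1) - (b1 * d2 - b2 * d1))). ring.
  rewrite E. unfold w. ring.
Qed.

Lemma st_facts U T n tv u : standing_setting U T n tv u ->
  0 < T /\ (1 <= n)%nat /\ tv 0%nat = 0 /\ tv (2 * n)%nat = 2 * T /\
  (forall i, (i < 2 * n)%nat -> tv i < tv (S i)) /\
  (forall i, (i <= n)%nat -> tv (i + n)%nat = tv i + T) /\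
  (forall t, u (t + T) = vopp (u t)) /\ pcurve tv 0 (2 * n) u.
Proof.
  intros H.
  destruct H as [Hcomp [Hconv [Hsym [Hint [HT [Hn [H0 [H2n [Hlt [Hsh [Husym [Hbd [Hinj Harcs]]]]]]]]]]]]].
  repeat split; auto.
  intros i Hi. destruct (Harcs i ltac:(lia)) as [g [Sg [Hg _]]]. exists g; split; auto.
  intros s Hs; apply Hg; auto.
Qed.

Lemma u_per T u : (forall t, u (t + T) = vopp (u t)) -> u (2 * T) = u 0.
Proof.
  intros H. replace (2 * T) with (T + T) by ring. rewrite H.
  replace (u T) with (u (0 + T)) by (f_equal; ring). rewrite H. unfold vopp; simpl.
  apply pair_eq; simpl; ring.
Qed.

Lemma full_int T (n : nat) tv a b : tv 0%nat = 0 -> tv (2 * n)%nat = 2 * T ->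
  (forall i, (i < 2 * n)%nat -> tv i < tv (S i)) ->
  pcurve tv 0 (2 * n) a -> pcurve tv 0 (2 * n) b ->
  is_RInt (fun t => bracket (a t) (dv b t)) 0 (2 * T) (RInt (fun t => bracket (a t) (dv b t)) 0 (2 * T)).
Proof.
  intros H0 H2n Hm Ha Hb.
  assert (Hm' : forall i, (0 <= i < 2 * n)%nat -> tv i < tv (S i)) by (intros; apply Hm; lia).
  assert (X := pwc_agree tv 0 (2 * n) (fun t => bracket (a t) (dv b t)) _ Hm' (pwc_bdv _ _ _ _ _ Ha Hb)
     (fun _ _ _ _ => eq_refl) (2 * n) ltac:(lia)).
  rewrite Nat.add_0_l, H0, H2n in X. exact X.
Qed.

Lemma dv_scal (lam : R) (u : R -> vec) t : dv (fun s => vscal lam (u s)) t = vscal lam (dv u t).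
Proof.
  unfold dv, vscal; simpl. rewrite (Derive_scal (fun s => fst (u s))), (Derive_scal (fun s => snd (u s))). reflexivity.
Qed.

Lemma adm_pc T n tv u g r : admissible T n tv u g r -> pcurve tv 0 (2 * n) g.
Proof. intros [_ [_ [H _]]] i Hi. apply H; lia. Qed.

Lemma lstar_eq U T n tv u g r : standing_setting U T n tv u -> admissible T n tv u g r ->
  is_RInt (fun t => r t * bracket (u t) (dv u t)) 0 (2 * T) (RInt (fun t => bracket (u t) (dv g t)) 0 (2 * T)).
Proof.
  intros Hst Hadm. destruct (st_facts _ _ _ _ _ Hst) as [HT [Hn [H0 [H2n [Hm [Hsh [Husym Hpu]]]]]]].
  assert (Hpg := adm_pc _ _ _ _ _ _ Hadm).
  assert (Hm' : forall i, (0 <= i < 2 * n)%nat -> tv i < tv (S i)) by (intros; apply Hm; lia).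
  assert (Ag : forall i t, (0 <= i < 2 * n)%nat -> tv i < t < tv (S i) ->
    r t * bracket (u t) (dv u t) = bracket (u t) (dv g t)).
  { intros i t Hi Ht. destruct Hadm as [_ [_ [_ Hd]]]. rewrite (Hd i t ltac:(lia) Ht).
    unfold bracket, vscal; simpl; ring. }
  assert (X := pwc_agree tv 0 (2 * n) (fun t => r t * bracket (u t) (dv u t)) _ Hm' (pwc_bdv _ _ _ _ _ Hpu Hpg) Ag (2 * n) ltac:(lia)).
  rewrite Nat.add_0_l, H0, H2n in X. exact X.
Qed.

Lemma part23 U T n tv u g r lam : standing_setting U T n tv u -> admissible T n tv u g r ->
  Lstar T u r = 0 ->
  mixed_area T g (fun t => vscal lam (u t)) = 0 /\ mixed_area T (fun t => vscal lam (u t)) g = 0.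
Proof.
  intros Hst Hadm HL. destruct (st_facts _ _ _ _ _ Hst) as [HT [Hn [H0 [H2n [Hm [Hsh [Husym Hpu]]]]]]].
  assert (Hpg := adm_pc _ _ _ _ _ _ Hadm).
  assert (J0 : RInt (fun t => bracket (u t) (dv g t)) 0 (2 * T) = 0).
  { unfold Lstar in HL. rewrite (isR_RInt _ _ _ _ (lstar_eq U T n tv u g r Hst Hadm)) in HL. exact HL. }
  assert (I0 : RInt (fun t => bracket (g t) (dv u t)) 0 (2 * T) = 0).
  { rewrite (ibp T n tv g u H0 H2n Hm Hpg Hpu). exact J0.
    rewrite (u_per T u Husym). destruct Hadm as [_ [Hper _]]. 
    replace (2 * T) with (0 + 2 * T) by ring. rewrite Hper. reflexivity. }
  split; unfold mixed_area.
  - rewrite (isR_RInt _ _ _ (lam * RInt (fun t => bracket (g t) (dv u t)) 0 (2 * T))).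
    rewrite I0; ring.
    apply (isR_ext (fun t => lam * bracket (g t) (dv u t))).
    intros t; rewrite dv_scal; unfold bracket, vscal; simpl; ring.
    apply isR_scal. exact (full_int T n tv g u H0 H2n Hm Hpg Hpu).
  - rewrite (isR_RInt _ _ _ (lam * RInt (fun t => bracket (u t) (dv g t)) 0 (2 * T))).
    rewrite J0; ring.
    apply (isR_ext (fun t => lam * bracket (u t) (dv g t))).
    intros t; unfold bracket, vscal; simpl; ring.
    apply isR_scal. exact (full_int T n tv u g H0 H2n Hm Hpu Hpg).
Qed.

Lemma pc_sub tv n j k a : pcurve tv 0 (2 * n) a -> (k <= 2 * n)%nat -> pcurve tv j k a.
Proof. intros H Hk i Hi. apply H; lia. Qed.

Lemma deriv_at tv n a i t : pcurve tv 0 (2 * n) a -> (i < 2 * n)%nat -> tv i < t < tv (S i) ->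
  is_derive (fun s => fst (a s)) t (fst (dv a t)) /\ is_derive (fun s => snd (a s)) t (snd (dv a t)).
Proof.
  intros H Hi Ht. destruct (H i ltac:(lia)) as [A [SA HA]].
  exact (dv_comp_deriv a A _ _ t Ht HA SA).
Qed.

Lemma not_vertex n tv i t : (forall i, (i < 2 * n)%nat -> tv i < tv (S i)) -> (i < 2 * n)%nat ->
  tv i < t < tv (S i) -> ~ is_vertex n tv t.
Proof.
  intros Hm Hi Ht [j [Hj E]]. subst t.
  destruct (Compare_dec.le_lt_dec j i).
  - assert (tv j <= tv i) by (apply (tv_mono n); auto; lia). lra.
  - assert (tv (S i) <= tv j) by (apply (tv_mono n); auto; lia). lra.
Qed.

Lemma part1 U T n tv u g1 r1 g2 r2 : standing_setting U T n tv u ->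
  in_C0_sym T n tv u g1 r1 -> in_C0_cw T n tv u g2 r2 -> mixed_area T g1 g2 = 0.
Proof.
  intros Hst [Had1 [Hs1 HL1]] [Had2 [HL2 [c Hc]]].
  destruct (st_facts _ _ _ _ _ Hst) as [HT [Hn [H0 [H2n [Hm [Hsh [Husym Hpu]]]]]]].
  assert (Hp1 := adm_pc _ _ _ _ _ _ Had1). assert (Hp2 := adm_pc _ _ _ _ _ _ Had2).
  assert (HTn : tv n = T) by (assert (E := Hsh 0%nat ltac:(lia)); rewrite Nat.add_0_l, H0 in E; lra).
  assert (H2n' : tv (n + n)%nat = 2 * T) by (replace (n + n)%nat with (2 * n)%nat by lia; auto).
  assert (M0 : forall i, (0 <= i < n)%nat -> tv i < tv (S i)) by (intros; apply Hm; lia).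
  assert (M1 : forall i, (n <= i < 2 * n)%nat -> tv i < tv (S i)) by (intros; apply Hm; lia).
  assert (Mall : forall i, (0 <= i < 2 * n)%nat -> tv i < tv (S i)) by (intros; apply Hm; lia).
  set (Q := fun t => bracket (g2 t) (dv g1 t)).
  set (M := fun t => bracket (u t) (dv g1 t)).
  assert (IB : RInt (fun t => bracket (g1 t) (dv g2 t)) 0 (2 * T) = RInt Q 0 (2 * T)).
  { apply (ibp T n tv g1 g2 H0 H2n Hm Hp1 Hp2).
    destruct Had1 as [_ [P1 _]]. destruct Had2 as [_ [P2 _]].
    replace (2 * T) with (0 + 2 * T) by ring. rewrite P1, P2. reflexivity. }
  assert (PT : forall i t, (0 <= i < n)%nat -> tv i < t < tv (S i) ->
    Q t + Q (t + T) = c * M t /\ M t + M (t + T) = 2 * M t).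
  { intros i t Hi Ht.
    assert (Ht2 : tv (i + n)%nat < t + T < tv (S (i + n))).
    { rewrite (Hsh i ltac:(lia)). replace (S (i + n)) with (S i + n)%nat by lia.
      rewrite (Hsh (S i) ltac:(lia)). lra. }
    destruct (deriv_at tv n u (i + n) (t + T) Hpu ltac:(lia) Ht2) as [Du1 Du2].
    destruct (deriv_at tv n g1 (i + n) (t + T) Hp1 ltac:(lia) Ht2) as [Dg1 Dg2].
    assert (Eu := dv_anti u T t Husym Du1 Du2).
    assert (Eg := dv_anti g1 T t Hs1 Dg1 Dg2).
    assert (Hw := w_nz U T n tv u Hst i t ltac:(lia) Ht).
    assert (B0 : tv 0%nat <= tv i) by (apply (tv_mono n); auto; lia).
    assert (B1 : tv (S i) <= tv n) by (apply (tv_mono n); auto; lia).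
    assert (Hcw := Hc t ltac:(lra) (not_vertex n tv i t Hm ltac:(lia) Ht)).
    destruct Had1 as [_ [_ [_ Hd1]]].
    assert (Ed := Hd1 i t ltac:(lia) Ht).
    unfold Q, M. rewrite Eg, Ed. split.
    - unfold vfield in Hcw. rewrite Eu, Husym in Hcw.
      apply key_alg; auto.
    - rewrite Husym. unfold bracket, vopp, vscal; simpl; ring. }
  assert (PQ : pwc tv 0 (2 * n) Q) by (apply pwc_bdv; auto).
  assert (PM : pwc tv 0 (2 * n) M) by (apply pwc_bdv; auto).
  assert (PQ0 : pwc tv 0 n Q) by (intros i Hi; apply PQ; lia).
  assert (PQ1 : pwc tv n (2 * n) Q) by (intros i Hi; apply PQ; lia).
  assert (PM0 : pwc tv 0 n M) by (intros i Hi; apply PM; lia).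
  assert (PM1 : pwc tv n (2 * n) M) by (intros i Hi; apply PM; lia).
  assert (Iq0 := pwc_agree tv 0 n Q Q M0 PQ0 (fun _ _ _ _ => eq_refl) n ltac:(lia)).
  assert (Iq1 := pwc_agree tv n (2 * n) Q Q M1 PQ1 (fun _ _ _ _ => eq_refl) n ltac:(lia)).
  assert (Im0 := pwc_agree tv 0 n M M M0 PM0 (fun _ _ _ _ => eq_refl) n ltac:(lia)).
  assert (Im1 := pwc_agree tv n (2 * n) M M M1 PM1 (fun _ _ _ _ => eq_refl) n ltac:(lia)).
  rewrite Nat.add_0_l, H0, HTn in Iq0, Im0. rewrite HTn, H2n' in Iq1, Im1.
  set (QA := RInt Q 0 T) in *. set (QB := RInt Q T (2 * T)) in *.
  set (MA := RInt M 0 T) in *. set (MB := RInt M T (2 * T)) in *.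
  assert (Sq : is_RInt (fun t => Q t + Q (t + T)) 0 T (QA + QB)).
  { apply isR_plus; auto. apply isR_shift. replace (0 + T) with T by ring. replace (T + T) with (2 * T) by ring. auto. }
  assert (Sm : is_RInt (fun t => M t + M (t + T)) 0 T (MA + MB)).
  { apply isR_plus; auto. apply isR_shift. replace (0 + T) with T by ring. replace (T + T) with (2 * T) by ring. auto. }
  assert (Aq := pwc_agree tv 0 n (fun t => Q t + Q (t + T)) (fun t => c * M t) M0 (pwc_scal _ _ _ c _ PM0)
     (fun i t Hi Ht => proj1 (PT i t Hi Ht)) n ltac:(lia)).
  assert (Am := pwc_agree tv 0 n (fun t => M t + M (t + T)) (fun t => 2 * M t) M0 (pwc_scal _ _ _ 2 _ PM0)
     (fun i t Hi Ht => proj2 (PT i t Hi Ht)) n ltac:(lia)).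
  rewrite Nat.add_0_l, H0, HTn in Aq, Am.
  rewrite (isR_RInt _ _ _ _ (isR_scal _ _ _ c _ Im0)) in Aq.
  rewrite (isR_RInt _ _ _ _ (isR_scal _ _ _ 2 _ Im0)) in Am.
  assert (E1 := isR_uniq _ _ _ _ _ Sq Aq).
  assert (E2 := isR_uniq _ _ _ _ _ Sm Am).
  assert (LM := lstar_eq U T n tv u g1 r1 Hst Had1).
  unfold Lstar in HL1. rewrite (isR_RInt _ _ _ _ LM) in HL1.
  fold M in HL1.
  rewrite (isR_RInt _ _ _ _ (isR_chasles _ _ _ _ _ _ Im0 Im1)) in HL1.
  rewrite (isR_RInt _ _ _ _ (isR_chasles _ _ _ _ _ _ Iq0 Iq1)) in IB.
  unfold mixed_area. rewrite IB. 
  assert (MA = 0) by lra. rewrite E1, H. ring.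
Qed.

Theorem mainTheorem7 (U : pset) (T : R) (n : nat) (tv : nat -> R) (u : R -> vec) :
  standing_setting U T n tv u ->
  (forall g1 r1 g2 r2,
     in_C0_sym T n tv u g1 r1 -> in_C0_cw T n tv u g2 r2 ->
     mixed_area T g1 g2 = 0) /\
  (forall g r lam, in_C0_sym T n tv u g r ->
     mixed_area T g (fun t => vscal lam (u t)) = 0 /\
     mixed_area T (fun t => vscal lam (u t)) g = 0) /\
  (forall g r lam, in_C0_cw T n tv u g r ->
     mixed_area T g (fun t => vscal lam (u t)) = 0 /\
     mixed_area T (fun t => vscal lam (u t)) g = 0).
Proof.
  intros Hst. split; [|split].
  - intros g1 r1 g2 r2 H1 H2. exact (part1 U T n tv u g1 r1 g2 r2 Hst H1 H2).
  - intros g r lam [Ha [_ HL]]. exact (part23 U T n tv u g r lam Hst Ha HL).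
  - intros g r lam [Ha [HL _]]. exact (part23 U T n tv u g r lam Hst Ha HL).
Qed.
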